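(* Fix $d\ge 2$ and for $d\times d$ density matrices $\rho,\sigma$ let $$\mathcal{F}_C(\rho,\sigma)=\frac{1-r}{2}+\frac{1+r}{2}\left[\operatorname{tr}(\rho\sigma)+\sqrt{1-\operatorname{tr}(\rho^2)}\sqrt{1-\operatorname{tr}(\sigma^2)}\right],\qquad r=\frac{1}{d-1}.$$ Then $\sqrt{1-\mathcal{F}_C(\rho,\sigma)}$ is a metric on the set of $d\times d$ density matrices.
   Context: A density matrix is a positive semidefinite complex matrix of unit trace. A metric is a function that is nonnegative, vanishes exactly on equal arguments, is symmetric, and satisfies the triangle inequality. *)

(* Defs.v *)
From mathcomp Require Import all_boot all_order all_algebra.
From mathcomp Require Import reals.
From mathcomp.real_closed Require Export complex.
Export GRing.Theory Num.Theory.

Set Implicit Arguments.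
Unset Strict Implicit.
Unset Printing Implicit Defensive.

Local Open Scope ring_scope.

Definition adjmx {C : numClosedFieldType} m n (A : 'M[C]_(m, n)) : 'M[C]_(n, m) :=
  (map_mx Num.conj A)^T.

(* Positive semidefinite: Hermitian with nonnegative quadratic form
   (in a numClosedFieldType, [0 <= z] means z is real and nonnegative). *)
Definition psd {C : numClosedFieldType} n (A : 'M[C]_n) : Prop :=
  adjmx A = A /\ forall v : 'cV[C]_n, 0 <= (adjmx v *m A *m v) 0 0.

Definition density_matrix {C : numClosedFieldType} n (A : 'M[C]_n) : Prop :=
  psd A /\ \tr A = 1.

Definition FC {C : numClosedFieldType} (d : nat) (rho sigma : 'M[C]_d) : C :=
  let r := ((d - 1)%:R)^-1 in
  (1 - r) / 2%:R + (1 + r) / 2%:R *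
    (\tr (rho *m sigma)
     + sqrtC (1 - \tr (rho *m rho)) * sqrtC (1 - \tr (sigma *m sigma))).

Definition distC {C : numClosedFieldType} (d : nat) (rho sigma : 'M[C]_d) : C :=
  sqrtC (1 - FC rho sigma).

(* D is a metric on the set S (values compared in the order of C,
   so [0 <= x] forces reality and nonnegativity). *)
Definition metric_on {T : Type} {C : numClosedFieldType}
    (S : T -> Prop) (D : T -> T -> C) : Prop :=
  [/\ (forall x y, S x -> S y -> 0 <= D x y),
      (forall x y, S x -> S y -> (D x y = 0 <-> x = y)),
      (forall x y, S x -> S y -> D x y = D y x) &
      (forall x y z, S x -> S y -> S z -> D x z <= D x y + D y z)].

(* Main.v *)
Require Import Defs.
From mathcomp Require Import all_boot all_order all_algebra.
From mathcomp Require Import reals.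
From mathcomp.real_closed Require Import complex.
From mathcomp Require Import ring.
Import Order.TTheory GRing.Theory Num.Theory.
Set Implicit Arguments.
Unset Strict Implicit.
Local Open Scope ring_scope.

Lemma CSineq (C : numClosedFieldType) (I : finType) (a b : I -> C) :
  (forall i, 0 <= a i) -> (forall i, 0 <= b i) ->
  (\sum_i a i * b i) ^+ 2 <= (\sum_i a i ^+ 2) * (\sum_i b i ^+ 2).
Proof.
move=> ha hb.
set P := \sum_i \sum_j a i ^+ 2 * b j ^+ 2.
set P' := \sum_i \sum_j a j ^+ 2 * b i ^+ 2.
set S := \sum_i \sum_j (a i * b i) * (a j * b j).
have eP : P = (\sum_i a i ^+ 2) * (\sum_i b i ^+ 2).
  by rewrite /P mulr_suml; apply: eq_bigr => i _; rewrite mulr_sumr.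
have eP' : P' = (\sum_i a i ^+ 2) * (\sum_i b i ^+ 2).
  rewrite mulrC /P' mulr_suml; apply: eq_bigr => i _; rewrite mulr_sumr.
  by apply: eq_bigr => j _; rewrite mulrC.
have eS : S = (\sum_i a i * b i) ^+ 2.
  by rewrite /S expr2 mulr_suml; apply: eq_bigr => i _; rewrite mulr_sumr.
have key : \sum_i \sum_j (a i * b j - a j * b i) ^+ 2 + 2%:R * S = P + P'.
  rewrite /S /P /P' mulr_sumr -!big_split; apply: eq_bigr => i _ /=.
  rewrite mulr_sumr -!big_split; apply: eq_bigr => j _ /=; ring.
have ge0 : 0 <= \sum_i \sum_j (a i * b j - a j * b i) ^+ 2.
  apply: sumr_ge0 => i _; apply: sumr_ge0 => j _.
  apply: real_exprn_even_ge0 => //.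
  by rewrite rpredB // rpredM // ger0_real.
have : 0 <= 2%:R * (P + P' - 2%:R * S) / 2%:R.
  by rewrite -key addrK mulrC mulrA mulVf ?pnatr_eq0 // mul1r.
rewrite mulrC mulrA mulVf ?pnatr_eq0 // mul1r eP eP' eS subr_ge0.
move=> h; rewrite -(ler_pM2l (_ : 0 < 2%:R)) ?ltr0n //.
apply: (le_trans h); rewrite le_eqVlt; apply/orP; left; apply/eqP; ring.
Qed.

Lemma sumsq_ge0 (C : numClosedFieldType) (I : finType) (f : I -> C) :
  0 <= \sum_i `|f i| ^+ 2.
Proof. by apply: sumr_ge0 => i _; rewrite exprn_ge0. Qed.

Lemma minkowski (C : numClosedFieldType) (I : finType) (f g : I -> C) :
  sqrtC (\sum_i `|f i + g i| ^+ 2) <=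
  sqrtC (\sum_i `|f i| ^+ 2) + sqrtC (\sum_i `|g i| ^+ 2).
Proof.
set A := \sum_i `|f i| ^+ 2; set B := \sum_i `|g i| ^+ 2.
have hA : 0 <= A by apply: sumsq_ge0.
have hB : 0 <= B by apply: sumsq_ge0.
rewrite -[X in _ <= X]sqrCK ?addr_ge0 ?sqrtC_ge0 //.
rewrite ler_sqrtC ?nnegrE ?sumsq_ge0 ?exprn_ge0 ?addr_ge0 ?sqrtC_ge0 //.
have h1 : \sum_i `|f i + g i| ^+ 2 <= \sum_i (`|f i| + `|g i|) ^+ 2.
  apply: ler_sum => i _; apply: lerXn2r; rewrite ?nnegrE ?addr_ge0 //.
  exact: ler_normD.
apply: (le_trans h1).
have e : \sum_i (`|f i| + `|g i|) ^+ 2 = A + B + 2%:R * \sum_i `|f i| * `|g i|.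
  rewrite /A /B mulr_sumr -!big_split; apply: eq_bigr => i _ /=; ring.
rewrite e.
have cs := @CSineq _ _ (fun i => `|f i|) (fun i => `|g i|) (fun i => normr_ge0 _) (fun i => normr_ge0 _); rewrite /= in cs.
have h2 : \sum_i `|f i| * `|g i| <= sqrtC A * sqrtC B.
  rewrite -sqrtCM ?nnegrE // -[X in X <= _]sqrCK; last first.
    by apply: sumr_ge0 => i _; rewrite mulr_ge0.
  by rewrite ler_sqrtC ?nnegrE ?exprn_ge0 ?mulr_ge0 //; apply: sumr_ge0 => i _; rewrite mulr_ge0.
have -> : (sqrtC A + sqrtC B) ^+ 2 = A + B + 2%:R * (sqrtC A * sqrtC B).
  have := sqrtCK A; have := sqrtCK B => eB eA.
  rewrite -{2}eA -{2}eB; ring.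
by rewrite lerD2l ler_pM2l ?ltr0n.
Qed.

Section M.
Variable C : numClosedFieldType.
Variable n : nat.
Implicit Types A B : 'M[C]_n.

Lemma herm A : psd A -> forall i j, A j i = (A i j)^*.
Proof. by case=> h _ i j; rewrite -{1}h !mxE. Qed.

Lemma adjmxD m k (U V : 'M[C]_(m, k)) : adjmx (U + V) = adjmx U + adjmx V.
Proof. by apply/matrixP => a b; rewrite !mxE rmorphD. Qed.

Lemma adjmxZ m k (x : C) (U : 'M[C]_(m, k)) : adjmx (x *: U) = x^* *: adjmx U.
Proof. by apply/matrixP => a b; rewrite !mxE rmorphM. Qed.

Lemma adjmx_delta (i : 'I_n) : adjmx (delta_mx i 0 : 'cV[C]_n) = delta_mx 0 i.
Proof. by apply/matrixP => a b; rewrite !mxE rmorph_nat andbC. Qed.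

Lemma entry_delta A i j : ((delta_mx 0 i : 'rV[C]_n) *m A *m (delta_mx j 0 : 'cV[C]_n)) 0 0 = A i j.
Proof. by rewrite -rowE -colE !mxE. Qed.

Lemma qform2 A (x y : C) i j :
  (adjmx (x *: delta_mx i 0 + y *: delta_mx j 0 : 'cV[C]_n) *m A *m
     (x *: delta_mx i 0 + y *: delta_mx j 0 : 'cV[C]_n)) 0 0 =
  x^* * x * A i i + x^* * y * A i j + y^* * x * A j i + y^* * y * A j j.
Proof.
rewrite adjmxD !adjmxZ !adjmx_delta !mulmxDl !mulmxDr.
rewrite -!scalemxAl -!scalemxAr -!rowE -!colE !mxE; ring.
Qed.

Lemma psd_diag A i : psd A -> 0 <= A i i.
Proof.
move=> hA; have := hA.2 (1 *: delta_mx i 0 + 0 *: delta_mx i 0).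
by rewrite qform2 rmorph1 rmorph0 !(mul0r, mulr0, mul1r, addr0).
Qed.

Lemma psd_2x2 A i j : psd A -> A i j * (A i j)^* <= A i i * A j j.
Proof.
move=> hA.
set a := A i i; set b := A j j; set c := A i j; set m := c * c^*.
have ha : 0 <= a by apply: psd_diag.
have hb : 0 <= b by apply: psd_diag.
have hm : 0 <= m by rewrite /m -normCK exprn_ge0.
have hji : A j i = c^* by rewrite (herm hA).
have ra : a^* = a by rewrite conj_Creal ?ger0_real.
have rb : b^* = b by rewrite conj_Creal ?ger0_real.
have rm : m^* = m by rewrite conj_Creal ?ger0_real.
have h1 := hA.2 (b *: delta_mx i 0 + (- c^*) *: delta_mx j 0).
rewrite qform2 -/a -/b -/c hji rb rmorphN /= conjCK in h1.
have e1 : b * b * a + b * - c^* * c + - c * b * c^* + - c * - c^* * b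
          = b * (a * b - m) by rewrite /m; ring.
rewrite e1 in h1.
have h2 := hA.2 (m *: delta_mx i 0 + (- ((a + 1) * c^*)) *: delta_mx j 0).
rewrite qform2 -/a -/b -/c hji rm rmorphN rmorphM rmorphD rmorph1 /= ra conjCK in h2.
have e2 : m * m * a + m * - ((a + 1) * c^*) * c + - ((a + 1) * c) * m * c^* +
    - ((a + 1) * c) * - ((a + 1) * c^*) * b = m * (b * (a + 1) ^+ 2 - (a + 2%:R) * m).
  by rewrite /m; ring.
rewrite e2 in h2.
rewrite -subr_ge0; clearbody m.
have [b0|bpos] := eqVneq b 0.
  rewrite b0 mul0r sub0r mulrN oppr_ge0 in h2.
  have : m * ((a + 2%:R) * m) == 0.
    rewrite eq_le h2 /=; apply: mulr_ge0 => //; apply: mulr_ge0 => //; apply: addr_ge0 => //; exact: ler0n.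
  have a2 : a + 2%:R != 0 by rewrite gt_eqF // ltr_wpDl // ltr0n.
  rewrite !mulf_eq0 (negbTE a2) /= orbb => /eqP ->.
  by rewrite b0 mulr0 subr0.
have bp : 0 < b by rewrite lt_def bpos hb.
by rewrite -(pmulr_rge0 _ bp).
Qed.

Lemma trM (A B : 'M[C]_n) : \tr (A *m B) = \sum_i \sum_j A i j * B j i.
Proof. by rewrite /mxtrace; apply: eq_bigr => i _; rewrite mxE. Qed.

Lemma tr_sq A : psd A -> \tr (A *m A) = \sum_i \sum_j `|A i j| ^+ 2.
Proof.
move=> hA; rewrite trM; apply: eq_bigr => i _; apply: eq_bigr => j _.
by rewrite normCK (herm hA i j).
Qed.

Lemma dens_tr A : density_matrix A -> 0 <= 1 - \tr (A *m A).
Proof.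
rewrite /density_matrix => -[hA htr]; rewrite subr_ge0 (tr_sq hA).
have -> : 1 = \sum_i \sum_j A i i * A j j.
  rewrite -(expr1n _ 2) -htr /mxtrace expr2 mulr_suml.
  by apply: eq_bigr => i _; rewrite mulr_sumr.
apply: ler_sum => i _; apply: ler_sum => j _.
by rewrite normCK; apply: psd_2x2.
Qed.

Definition sv A := sqrtC (1 - \tr (A *m A)).
Definition Qd A B := \sum_i \sum_j `|A i j - B i j| ^+ 2 + `|sv A - sv B| ^+ 2.

Lemma sv_ge0 A : density_matrix A -> 0 <= sv A.
Proof. by move=> h; rewrite sqrtC_ge0 dens_tr. Qed.

Lemma Qd_ge0 A B : 0 <= Qd A B.
Proof.
apply: addr_ge0; last exact: exprn_ge0.
by apply: sumr_ge0 => i _; apply: sumr_ge0 => j _; apply: exprn_ge0.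
Qed.

Lemma Qd_eq A B : density_matrix A -> density_matrix B ->
  Qd A B = 2%:R * (1 - (\tr (A *m B) + sv A * sv B)).
Proof.
move=> dA dB; have hA := dA.1; have hB := dB.1.
have eX : \sum_i \sum_j `|A i j - B i j| ^+ 2 =
   \tr (A *m A) + \tr (B *m B) - \tr (A *m B) - \tr (B *m A).
  apply: (addIr (\tr (A *m B) + \tr (B *m A))).
  rewrite [RHS](_ : _ = \tr (A *m A) + \tr (B *m B)); last by ring.
  rewrite !trM addrA -!big_split; apply: eq_bigr => i _ /=.
  rewrite -!big_split; apply: eq_bigr => j _ /=.
  rewrite normCK rmorphB /= (herm hA i j) (herm hB i j); ring.
rewrite /Qd eX (mxtrace_mulC B A) real_normK; last first.
  by rewrite rpredB // ger0_real // sv_ge0.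
have -> : (sv A - sv B) ^+ 2 = sv A ^+ 2 + sv B ^+ 2 - 2%:R * (sv A * sv B) by ring.
rewrite /sv !sqrtCK; ring.
Qed.

Definition Kc := (1 + ((n - 1)%:R)^-1) / 2%:R / 2%:R : C.

Lemma Kc_gt0 : 0 < Kc.
Proof.
rewrite /Kc !divr_gt0 ?ltr0n // ltr_wpDr ?invr_ge0 ?ler0n //.
Qed.

Lemma distC_eq A B : density_matrix A -> density_matrix B ->
  distC A B = sqrtC Kc * sqrtC (Qd A B).
Proof.
move=> dA dB; rewrite -sqrtCM ?nnegrE ?Qd_ge0 ?ltW ?Kc_gt0 //.
rewrite /distC; congr sqrtC; rewrite Qd_eq // /FC /Kc /sv /=.
set r := ((n - 1)%:R)^-1; by field.
Qed.

Definition wv A (k : ('I_n * 'I_n) + 'I_1) : C :=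
  match k with inl p => A p.1 p.2 | inr _ => sv A end.

Lemma Qd_sum A B : Qd A B = \sum_k `|wv A k - wv B k| ^+ 2.
Proof.
rewrite big_sumType /= big_ord1 /Qd; congr (_ + _).
by rewrite pair_big.
Qed.

Lemma Qd_tri A B D :
  sqrtC (Qd A D) <= sqrtC (Qd A B) + sqrtC (Qd B D).
Proof.
rewrite !Qd_sum.
have -> : \sum_k `|wv A k - wv D k| ^+ 2 =
    \sum_k `|(wv A k - wv B k) + (wv B k - wv D k)| ^+ 2.
  by apply: eq_bigr => k _; rewrite addrA subrK.
exact: minkowski.
Qed.
End M.

Theorem theorem10 (R : realType) (d : nat) (hd : (2 <= d)%N) :
  metric_on (@density_matrix R[i] d) (@distC R[i] d).
Proof.
split.
- move=> x y dx dy; rewrite (distC_eq dx dy).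
  by apply: mulr_ge0; rewrite sqrtC_ge0; [exact: ltW (Kc_gt0 _ _) | exact: Qd_ge0].
- move=> x y dx dy; rewrite (distC_eq dx dy); split; last first.
    move=> <-; rewrite /Qd.
    rewrite subrr normr0 expr0n /= addr0 big1 ?sqrtC0 ?mulr0 // => i _.
    by rewrite big1 // => j _; rewrite subrr normr0 expr0n.
  move/eqP; rewrite mulf_eq0 sqrtC_eq0 (gt_eqF (Kc_gt0 _ _)) /= sqrtC_eq0.
  rewrite /Qd paddr_eq0 ?exprn_ge0 //; last first.
    by apply: sumr_ge0 => i _; apply: sumr_ge0 => j _; apply: exprn_ge0.
  case/andP => /eqP h _; apply/matrixP => i j.
  have hi : \sum_j `|x i j - y i j| ^+ 2 = 0.
    apply: (psumr_eq0P _ h) => // k _.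
    by apply: sumr_ge0 => l _; apply: exprn_ge0.
  have : `|x i j - y i j| ^+ 2 = 0.
    by apply: (psumr_eq0P _ hi) => // k _; apply: exprn_ge0.
  by move/eqP; rewrite expf_eq0 /= normr_eq0 subr_eq0 => /eqP.
- move=> x y _ _; rewrite /distC /FC (mxtrace_mulC x y).
  by rewrite (mulrC (sqrtC (1 - \tr (x *m x)))).
- move=> x y z dx dy dz; rewrite !distC_eq // -mulrDr.
  apply: ler_wpM2l; [by rewrite sqrtC_ge0; exact: ltW (Kc_gt0 _ _) | exact: Qd_tri].
Qed.
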